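(* Let $d\in(0,1]$ and $\kappa>0$, and let $L_d$, $E$ and $D(L_d)$ be as in the context. (Parabolic version) If $u\in C(\mathbb{R}^+,D(L_d))$ satisfies $u_t-L_d u\ge 0$ in $\mathbb{R}^+\times[0,1]^2$ and $u(0,x)=f(x)\ge 0$ for $x\in[0,1]^2$, then $u(t,x)\ge 0$ for all $t\ge0$, $x\in[0,1]^2$. (Elliptic version) If $u\in D(L_d)$ satisfies $-L_d u\ge 0$ in $[0,1]^2$, then $u(x)\ge 0$ for all $x\in[0,1]^2$.
   Context: Let $\mathcal D=[0,1]^2$, $M=\begin{pmatrix} d & -d\\ -1 & 1\end{pmatrix}$, and $$L_d u(x)=\frac{x_1(1-x_1)}{2}u_{x_1x_1}(x)+\frac{x_2(1-x_2)}{2d}u_{x_2x_2}(x)-\kappa\, Mx\cdot\nabla u(x).$$ Let $E=\{f\in C(\mathcal D): f(0,0)=f(1,1)=0\}$ with the sup norm. For $N$ with $N_2=dN$ an integer, let $N_1=N$, $\delta t=1/N$, $A=\mathrm{Id}-\frac{\kappa}{N}M$, and $$B_N(g)(x)=\sum_{j_1=0}^{N_1}\sum_{j_2=0}^{N_2}\binom{N_1}{j_1}\binom{N_2}{j_2}x_1^{j_1}(1-x_1)^{N_1-j_1}x_2^{j_2}(1-x_2)^{N_2-j_2}\,g\!\left(\tfrac{j_1}{N_1},\tfrac{j_2}{N_2}\right).$$ The domain is $D(L_d)=\{f\in E:\ (B_N(f\circ A)-f)/\delta t\to L_d f \text{ in } E \text{ as } N\to\infty\}$. In particular every $u\in D(L_d)$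 vanishes at $(0,0)$ and $(1,1)$; no condition is imposed on the rest of the boundary.
   Formalization: The parameter d ∈ (0,1] is also rational, d = p/q with natural numbers p and q > 0. The paper assumes this as well. *)

(* Defs.v *)
From Stdlib Require Import Reals Lra.
From Coquelicot Require Import Coquelicot.
Open Scope R_scope.

(* The square D = [0,1]^2; functions on D are represented as R -> R -> R
   (values outside D are irrelevant). *)
Definition inD (x1 x2 : R) : Prop := 0 <= x1 <= 1 /\ 0 <= x2 <= 1.

Definition contD (f : R -> R -> R) : Prop :=
  forall x1 x2, inD x1 x2 -> forall eps, 0 < eps -> exists delta, 0 < delta /\
    forall y1 y2, inD y1 y2 -> Rabs (y1 - x1) < delta -> Rabs (y2 - x2) < delta ->
      Rabs (f y1 y2 - f x1 x2) < eps.

Definition inE (f : R -> R -> R) : Prop := contD f /\ f 0 0 = 0 /\ f 1 1 = 0.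

Definition bernstein (N1 N2 : nat) (g : R -> R -> R) (x1 x2 : R) : R :=
  sum_f_R0 (fun j1 => sum_f_R0 (fun j2 =>
      Binomial.C N1 j1 * Binomial.C N2 j2 * x1 ^ j1 * (1 - x1) ^ (N1 - j1)
        * x2 ^ j2 * (1 - x2) ^ (N2 - j2)
        * g (INR j1 / INR N1) (INR j2 / INR N2)) N2) N1.

(* A = Id - (kappa/N) M with M = [[d, -d], [-1, 1]] ; (f o A)(x) *)
Definition compA (d kappa : R) (N : nat) (f : R -> R -> R) (x1 x2 : R) : R :=
  f (x1 - kappa / INR N * (d * x1 - d * x2))
    (x2 - kappa / INR N * (- x1 + x2)).

(* Generator relation: f in D(L_d) and L_d f = g, i.e. f, g in E and
   (B_N(f o A) - f)/dt -> g uniformly on D as N -> oo along the N >= 1 with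
   N2 = d N an integer (N1 = N, dt = 1/N). *)
Definition gen (d kappa : R) (f g : R -> R -> R) : Prop :=
  inE f /\ inE g /\
  forall eps, 0 < eps -> exists N0 : nat, forall (N N2 : nat),
    (1 <= N)%nat -> (N0 <= N)%nat -> INR N2 = d * INR N ->
    forall x1 x2, inD x1 x2 ->
      Rabs ((bernstein N N2 (compA d kappa N f) x1 x2 - f x1 x2) / (1 / INR N)
            - g x1 x2) < eps.

Definition inDom (d kappa : R) (f : R -> R -> R) : Prop := exists g, gen d kappa f g.

(* Main.v *)
Require Import Defs.
From Stdlib Require Import Reals.
From Coquelicot Require Import Coquelicot.
Open Scope R_scope.
From Stdlib Require Import Lra Lia Ranalysis.
From mathcomp Require all_boot all_order all_algebra.
From mathcomp Require all_classical all_reals all_analysis.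
From mathcomp Require Rstruct Rstruct_topology.
Module EVTM.
Import all_boot all_order all_algebra.
Import all_classical all_reals all_analysis.
Import Rstruct Rstruct_topology.
Import Order.TTheory GRing.Theory Num.Theory.
Import numFieldNormedType.Exports.
Lemma EVT3 (T : R) (f : R -> R -> R -> R) : Rle 0 T ->
 (forall t x1 x2, Rle 0 t /\ Rle t T -> inD x1 x2 -> forall eps, Rlt 0 eps ->
   exists delta, Rlt 0 delta /\ forall s y1 y2, Rle 0 s /\ Rle s T -> inD y1 y2 ->
    Rlt (Rabs (Rminus s t)) delta -> Rlt (Rabs (Rminus y1 x1)) delta -> Rlt (Rabs (Rminus y2 x2)) delta ->
    Rlt (Rabs (Rminus (f s y1 y2) (f t x1 x2))) eps) ->
 exists t x1 x2, (Rle 0 t /\ Rle t T) /\ inD x1 x2 /\ forall s y1 y2, Rle 0 s /\ Rle s T -> inD y1 y2 ->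
   Rle (f t x1 x2) (f s y1 y2).
Proof.
move=> T0 fc.
pose F (p : R * (R * R)) := f p.1 p.2.1 p.2.2.
pose A : set (R * (R * R)) := (`[0%R, T] `*` (`[0%R, 1%R] `*` `[0%R, 1%R]))%classic.
have cA : compact A.
  by apply: compact_setX; [exact: segment_compact| apply: compact_setX; exact: segment_compact].
have A0 : (A !=set0)%classic.
  exists (0%R, (0%R, 0%R)); rewrite /A /=; rewrite !in_itv /= !lexx /= ler01.
  by split => //; apply/RleP.
have cF : (continuous (from_subspace A F)).
  apply/subspace_continuousP => -[t [x1 x2]].
  rewrite /A /= !in_itv /= => -[/andP[t0 tT] [/andP[x10 x11] /andP[x20 x21]]].
  have := @cvgrPdist_lt _ R^o _ _ (within_filter _ _) (from_subspace A F) (F (t,(x1,x2))). move=> ->. move=> e e0.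
  have h1 : Rle 0 t /\ Rle t T by split; apply/RleP.
  have h2 : inD x1 x2 by split; split; apply/RleP.
  have h3 : Rlt 0 e by apply/RltP.
  have [del [del0 H]] := fc t x1 x2 h1 h2 e h3.
  rewrite /within; apply/nbhs_ballP; exists del; first by apply/RltP.
  move=> [s [y1 y2]] /= [/= b1 [/= b2 b3]].
  rewrite /A /= !in_itv /= => -[/andP[s0 sT] [/andP[y10 y11] /andP[y20 y21]]].
  rewrite /from_subspace /F /= distrC -RabsE; apply/RltP; apply: H.
  - by split; apply/RleP.
  - by split; split; apply/RleP.
  - by move: b1; rewrite /ball /= distrC -RabsE => /RltP.
  - by move: b2; rewrite /ball /= distrC -RabsE => /RltP.
  - by move: b3; rewrite /ball /= distrC -RabsE => /RltP.
have [[t [x1 x2]] cin cmin] := compact_EVT_min A0 cA cF.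
move: (cin); rewrite inE /A /= !in_itv /= => -[/andP[t0 tT] [/andP[x10 x11] /andP[x20 x21]]].
exists t, x1, x2; split; first by split; apply/RleP.
split; first by split; split; apply/RleP.
move=> s y1 y2 [s0 sT] [[y10 y11] [y20 y21]]; apply/RleP.
apply: (cmin (s, (y1, y2))); rewrite inE /A /= !in_itv /=.
by split; [|split]; apply/andP; split; apply/RleP.
Qed.
End EVTM.

Open Scope R_scope.
Definition bw (n : nat) (x : R) (j : nat) : R :=
  Binomial.C n j * x ^ j * (1 - x) ^ (n - j).

Lemma M0 n x : sum_f_R0 (bw n x) n = 1.
Proof.
  unfold bw. rewrite <- binomial. replace (x + (1 - x)) with 1 by ring. apply pow1.
Qed.

Lemma C_S m i : (i <= m)%nat -> INR (S i) * Binomial.C (S m) (S i) = INR (S m) * Binomial.C m i.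
Proof.
  intros H. unfold Binomial.C.
  replace (S m - S i)%nat with (m - i)%nat by lia.
  rewrite !fact_simpl, !mult_INR.
  field. split; [apply INR_fact_neq_0|]. split; [apply INR_fact_neq_0| apply not_0_INR; lia].
Qed.

Lemma bw_S m x i : (i <= m)%nat ->
  bw (S m) x (S i) * INR (S i) = INR (S m) * x * bw m x i.
Proof.
  intros H. unfold bw.
  replace (S m - S i)%nat with (m - i)%nat by lia.
  change (x ^ S i) with (x * x ^ i).
  transitivity ((INR (S i) * Binomial.C (S m) (S i)) * x * x ^ i * (1 - x) ^ (m - i)); [ring|].
  rewrite C_S by exact H. ring.
Qed.

Lemma sum_scal_l (f : nat -> R) k n : sum_f_R0 (fun j => k * f j) n = k * sum_f_R0 f n.
Proof. induction n; simpl; [ring| rewrite IHn; ring]. Qed.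

Lemma sum_lin3 (f g h : nat -> R) a b c n :
  sum_f_R0 (fun j => f j * a + g j * b + h j * c) n
  = sum_f_R0 f n * a + sum_f_R0 g n * b + sum_f_R0 h n * c.
Proof. induction n; simpl; [ring| rewrite IHn; ring]. Qed.

Lemma M1 n x : sum_f_R0 (fun j => bw n x j * INR j) n = INR n * x.
Proof.
  destruct n as [|m]. { simpl. ring. }
  rewrite decomp_sum by lia. simpl pred.
  rewrite (sum_eq _ (fun i => INR (S m) * x * bw m x i)).
  2:{ intros i Hi. apply bw_S. exact Hi. }
  rewrite sum_scal_l, M0. simpl INR at 1. ring.
Qed.

Lemma M2 n x : sum_f_R0 (fun j => bw n x j * INR j * INR j) n = INR n * x * (INR (pred n) * x + 1).
Proof.
  destruct n as [|m]. { simpl. ring. }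
  rewrite decomp_sum by lia. simpl pred.
  rewrite (sum_eq _ (fun i => INR (S m) * x * (bw m x i * INR i + bw m x i))).
  2:{ intros i Hi. rewrite (bw_S m x i Hi). rewrite (S_INR i). ring. }
  rewrite sum_scal_l.
  replace (sum_f_R0 (fun i => bw m x i * INR i + bw m x i) m)
    with (sum_f_R0 (fun i => bw m x i * INR i) m + sum_f_R0 (bw m x) m)
    by (symmetry; apply plus_sum).
  rewrite M1, M0. simpl INR at 1. ring.
Qed.

Lemma L1 n x c0 c1 c2 : (1 <= n)%nat ->
  sum_f_R0 (fun j => bw n x j * (c0 + c1 * (INR j / INR n) + c2 * (INR j / INR n)^2)) n
  = c0 + c1 * x + c2 * (x^2 + x * (1 - x) / INR n).
Proof.
  intros Hn. assert (HN : INR n <> 0) by (apply not_0_INR; lia).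
  rewrite (sum_eq _ (fun j => bw n x j * c0 + (bw n x j * INR j) * (c1 / INR n)
      + (bw n x j * INR j * INR j) * (c2 / (INR n)^2))).
  2:{ intros i _. field. exact HN. }
  rewrite sum_lin3, M0, M1, M2.
  destruct n as [|m]; [lia|]. simpl pred. rewrite S_INR in *. field. exact HN.
Qed.

Lemma Bquad N1 N2 g x1 x2 a0 a1 a2 a11 a12 a22 :
  (1 <= N1)%nat -> (1 <= N2)%nat ->
  (forall y1 y2, g y1 y2 = a0 + a1 * y1 + a2 * y2 + a11 * y1^2 + a12 * y1 * y2 + a22 * y2^2) ->
  bernstein N1 N2 g x1 x2 = a0 + a1 * x1 + a2 * x2 + a11 * (x1^2 + x1 * (1 - x1) / INR N1)
     + a12 * x1 * x2 + a22 * (x2^2 + x2 * (1 - x2) / INR N2).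
Proof.
  intros H1 H2 Hg. unfold bernstein.
  rewrite (sum_eq _ (fun j1 => bw N1 x1 j1 *
     ((a0 + a2 * x2 + a22 * (x2^2 + x2 * (1 - x2) / INR N2))
      + (a1 + a12 * x2) * (INR j1 / INR N1) + a11 * (INR j1 / INR N1)^2))).
  2:{ intros j1 _.
      rewrite (sum_eq _ (fun j2 => bw N1 x1 j1 * (bw N2 x2 j2 *
        ((a0 + a1 * (INR j1 / INR N1) + a11 * (INR j1 / INR N1)^2)
         + (a2 + a12 * (INR j1 / INR N1)) * (INR j2 / INR N2) + a22 * (INR j2 / INR N2)^2)))).
      2:{ intros j2 _. rewrite Hg. unfold bw. ring. }
      rewrite sum_scal_l, L1 by exact H2. ring. }
  rewrite L1 by exact H1. ring.
Qed.

Lemma bern_lin N1 N2 g h c x1 x2 :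
  bernstein N1 N2 (fun a b => g a b + c * h a b) x1 x2
  = bernstein N1 N2 g x1 x2 + c * bernstein N1 N2 h x1 x2.
Proof.
  unfold bernstein.
  rewrite <- sum_scal_l, <- plus_sum. apply sum_eq; intros j1 _.
  rewrite <- sum_scal_l, <- plus_sum. apply sum_eq; intros j2 _. ring.
Qed.

Lemma C_pos n k : 0 <= Binomial.C n k.
Proof.
  unfold Binomial.C. apply Rmult_le_pos; [apply pos_INR|].
  left. apply Rinv_0_lt_compat. apply Rmult_lt_0_compat; apply INR_fact_lt_0.
Qed.

Lemma bern_mono N1 N2 g h x1 x2 : inD x1 x2 ->
  (forall j1 j2, (j1 <= N1)%nat -> (j2 <= N2)%nat ->
     h (INR j1 / INR N1) (INR j2 / INR N2) <= g (INR j1 / INR N1) (INR j2 / INR N2)) ->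
  bernstein N1 N2 h x1 x2 <= bernstein N1 N2 g x1 x2.
Proof.
  intros [[a b] [c e]] H. unfold bernstein.
  apply sum_Rle; intros j1 Hj1. apply sum_Rle; intros j2 Hj2.
  apply Rmult_le_compat_l; [|apply H; assumption].
  apply Rmult_le_pos; [apply Rmult_le_pos; [apply Rmult_le_pos; [apply Rmult_le_pos; [apply Rmult_le_pos|]|]|]|].
  all: first [apply C_pos | apply pow_le; lra].
Qed.

Lemma bern_ge N1 N2 g m x1 x2 : (1 <= N1)%nat -> (1 <= N2)%nat -> inD x1 x2 ->
  (forall j1 j2, (j1 <= N1)%nat -> (j2 <= N2)%nat ->
     m <= g (INR j1 / INR N1) (INR j2 / INR N2)) ->
  m <= bernstein N1 N2 g x1 x2.
Proof.
  intros H1 H2 HD H.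
  replace m with (bernstein N1 N2 (fun _ _ => m) x1 x2).
  - apply bern_mono; auto.
  - rewrite (Bquad _ _ _ _ _ m 0 0 0 0 0) by (auto; intros; ring). ring.
Qed.

Definition w1 (d : R) := 1 + d.
Definition w2 (d : R) := d * (1 + d).
Definition w11 (d : R) := -1 + d^2/2.
Definition w12 (d : R) := -2*d - d^2.
Definition w22 (d : R) := - d^2/2.

Definition Wf (d y1 y2 : R) : R := (y1 + d*y2)*((1+d) - y1 - d*y2) + d^2/2*(y1-y2)^2.

Definition Phi (d k x1 x2 t : R) : R :=
  k*(-(x1-x2)*(d*(w1 d + 2*w11 d*x1 + w12 d*x2) - (w2 d + w12 d*x1 + 2*w22 d*x2))
      + t*(x1-x2)^2*(w11 d*d^2 - w12 d*d + w22 d))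
  + (w11 d*(1-t*d)^2 + w12 d*(1-t*d)*t + w22 d*t^2)*x1*(1-x1)
  + (w11 d*(t*d)^2 + w12 d*(t*d)*(1-t) + w22 d*(1-t)^2)*x2*(1-x2)/d.

Lemma W_disc d k (N N2 : nat) x1 x2 : 0 < d -> (1 <= N)%nat -> INR N2 = d * INR N ->
  (bernstein N N2 (compA d k N (Wf d)) x1 x2 - Wf d x1 x2) / (1 / INR N)
  = Phi d k x1 x2 (k / INR N).
Proof.
  intros Hd HN HN2.
  assert (HNr : INR N <> 0) by (apply not_0_INR; lia).
  assert (HNp : 0 < INR N) by (apply lt_0_INR; lia).
  assert (HN2p : (1 <= N2)%nat).
  { destruct N2; [|lia]. simpl in HN2. nra. }
  set (t := k / INR N).
  set (al1 := 1 - t*d). set (be1 := t*d). set (al2 := t). set (be2 := 1 - t).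
  rewrite (Bquad _ _ _ _ _ 0 (w1 d*al1 + w2 d*al2) (w1 d*be1 + w2 d*be2)
     (w11 d*al1^2 + w12 d*al1*al2 + w22 d*al2^2)
     (2*w11 d*al1*be1 + w12 d*(al1*be2 + al2*be1) + 2*w22 d*al2*be2)
     (w11 d*be1^2 + w12 d*be1*be2 + w22 d*be2^2)); auto.
  - unfold Phi, Wf, w1, w2, w11, w12, w22, al1, al2, be1, be2, t.
    rewrite HN2. field. lra.
  - intros y1 y2. unfold compA, Wf, w1, w2, w11, w12, w22, al1, al2, be1, be2, t.
    field. exact HNr.
Qed.

Lemma Phi_cont d k x1 x2 : continuity_pt (Phi d k x1 x2) 0.
Proof. unfold Phi. reg. Qed.

Lemma Phi0 d k x1 x2 : 0 < d ->
  Phi d k x1 x2 0 = - k * d^2 * (1+d) * (x1-x2)^2 + w11 d * (x1*(1-x1)) - d/2 * (x2*(1-x2)).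
Proof. intros. unfold Phi, w1, w2, w11, w12, w22. field. lra. Qed.


Lemma Phi0_neg d k x1 x2 : 0 < d <= 1 -> 0 < k -> inD x1 x2 ->
  ~ (x1 = 0 /\ x2 = 0) -> ~ (x1 = 1 /\ x2 = 1) -> Phi d k x1 x2 0 < 0.
Proof.
  intros Hd Hk [[a1 b1] [a2 b2]] Hc0 Hc1. rewrite Phi0 by lra.
  assert (Hdd : d*d <= 1) by nra.
  assert (Hw : w11 d <= -1/2) by (unfold w11; replace (d^2) with (d*d) by ring; lra).
  assert (Ha : 0 <= x1 * (1 - x1)) by (apply Rmult_le_pos; lra).
  assert (Hb : 0 <= x2 * (1 - x2)) by (apply Rmult_le_pos; lra).
  assert (Hc : 0 <= (x1 - x2)^2) by apply pow2_ge_0.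
  assert (HK : 0 < k * d^2 * (1 + d)).
  { apply Rmult_lt_0_compat; [apply Rmult_lt_0_compat; [lra| nra]| lra]. }
  assert (H1 : w11 d * (x1 * (1 - x1)) <= -1/2 * (x1 * (1 - x1))) by nra.
  assert (H2 : 0 <= k * d^2 * (1 + d) * (x1 - x2)^2) by nra.
  assert (H3 : 0 <= d/2 * (x2 * (1 - x2))) by nra.
  destruct (Rle_lt_or_eq_dec _ _ Ha) as [Ha'|Ha']; [nra|].
  destruct (Rle_lt_or_eq_dec _ _ Hc) as [Hc'|Hc']; [nra|].
  exfalso.
  assert (Hx : x1 = x2) by nra.
  subst x2. symmetry in Ha'. apply Rmult_integral in Ha'.
  destruct Ha' as [Ha'|Ha']; [apply Hc0; split; auto | apply Hc1; split; lra].
Qed.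

Lemma Rabs6 a b c e f g :
  Rabs (a + b + c + e + f + g) <= Rabs a + Rabs b + Rabs c + Rabs e + Rabs f + Rabs g.
Proof.
  pose proof (Rabs_triang (a + b + c + e + f) g).
  pose proof (Rabs_triang (a + b + c + e) f).
  pose proof (Rabs_triang (a + b + c) e).
  pose proof (Rabs_triang (a + b) c).
  pose proof (Rabs_triang a b). lra.
Qed.

Lemma abs_prod_le b D s S : Rabs s <= S -> Rabs (b * D * s) <= Rabs b * S * Rabs D.
Proof.
  intros H. rewrite !Rabs_mult.
  replace (Rabs b * S * Rabs D) with (Rabs b * Rabs D * S) by ring.
  apply Rmult_le_compat_l; [apply Rmult_le_pos; apply Rabs_pos| exact H].
Qed.

Lemma contD_W d : contD (Wf d).
Proof.
  intros x1 x2 [[a1 b1] [a2 b2]] eps Heps.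
  set (K := Rabs (w1 d) + Rabs (w2 d) + 2 * Rabs (w11 d) + 2 * Rabs (w12 d) + 2 * Rabs (w22 d) + 1).
  assert (HK : 1 <= K).
  { unfold K. pose proof (Rabs_pos (w1 d)). pose proof (Rabs_pos (w2 d)).
    pose proof (Rabs_pos (w11 d)). pose proof (Rabs_pos (w12 d)). pose proof (Rabs_pos (w22 d)). lra. }
  exists (eps / (2 * K)). split. { apply Rdiv_lt_0_compat; lra. }
  intros y1 y2 [[c1 e1] [c2 e2]] H1 H2.
  replace (Wf d y1 y2 - Wf d x1 x2) with
    (w1 d * (y1 - x1) * 1 + w2 d * (y2 - x2) * 1 + w11 d * (y1 - x1) * (y1 + x1)
     + w12 d * (y1 - x1) * y2 + w12 d * (y2 - x2) * x1 + w22 d * (y2 - x2) * (y2 + x2))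
    by (unfold Wf, w1, w2, w11, w12, w22; field).
  eapply Rle_lt_trans; [apply Rabs6|].
  assert (Hs1 : Rabs 1 <= 1) by (rewrite Rabs_R1; lra).
  assert (Hs2 : Rabs (y1 + x1) <= 2) by (rewrite Rabs_pos_eq; lra).
  assert (Hs3 : Rabs y2 <= 1) by (rewrite Rabs_pos_eq; lra).
  assert (Hs4 : Rabs x1 <= 1) by (rewrite Rabs_pos_eq; lra).
  assert (Hs5 : Rabs (y2 + x2) <= 2) by (rewrite Rabs_pos_eq; lra).
  pose proof (abs_prod_le (w1 d) (y1 - x1) 1 1 Hs1).
  pose proof (abs_prod_le (w2 d) (y2 - x2) 1 1 Hs1).
  pose proof (abs_prod_le (w11 d) (y1 - x1) _ _ Hs2).
  pose proof (abs_prod_le (w12 d) (y1 - x1) _ _ Hs3).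
  pose proof (abs_prod_le (w12 d) (y2 - x2) _ _ Hs4).
  pose proof (abs_prod_le (w22 d) (y2 - x2) _ _ Hs5).
  assert (Hb : Rabs (w1 d) * 1 * Rabs (y1 - x1) + Rabs (w2 d) * 1 * Rabs (y2 - x2)
    + Rabs (w11 d) * 2 * Rabs (y1 - x1) + Rabs (w12 d) * 1 * Rabs (y1 - x1)
    + Rabs (w12 d) * 1 * Rabs (y2 - x2) + Rabs (w22 d) * 2 * Rabs (y2 - x2)
    <= K * (Rabs (y1 - x1) + Rabs (y2 - x2))).
  { unfold K. pose proof (Rabs_pos (w1 d)). pose proof (Rabs_pos (w2 d)).
    pose proof (Rabs_pos (w11 d)). pose proof (Rabs_pos (w12 d)). pose proof (Rabs_pos (w22 d)).
    pose proof (Rabs_pos (y1 - x1)). pose proof (Rabs_pos (y2 - x2)). nra. }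
  assert (Hc : K * (Rabs (y1 - x1) + Rabs (y2 - x2)) < K * (2 * (eps / (2 * K)))).
  { apply Rmult_lt_compat_l; lra. }
  replace (K * (2 * (eps / (2 * K)))) with eps in Hc by (field; lra).
  lra.
Qed.

Lemma contD_plus_scal f g c : contD f -> contD g -> contD (fun y1 y2 => f y1 y2 + c * g y1 y2).
Proof.
  intros Hf Hg x1 x2 Hx eps Heps.
  destruct (Hf x1 x2 Hx (eps/2)) as [d1 [Hd1 H1]]; [lra|].
  destruct (Hg x1 x2 Hx (eps / (2 * (Rabs c + 1)))) as [d2 [Hd2 H2]].
  { pose proof (Rabs_pos c). apply Rdiv_lt_0_compat; lra. }
  exists (Rmin d1 d2). split; [apply Rmin_pos; auto|].
  intros y1 y2 Hy Hy1 Hy2.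
  pose proof (Rmin_l d1 d2). pose proof (Rmin_r d1 d2).
  specialize (H1 y1 y2 Hy ltac:(lra) ltac:(lra)).
  specialize (H2 y1 y2 Hy ltac:(lra) ltac:(lra)).
  replace (f y1 y2 + c * g y1 y2 - (f x1 x2 + c * g x1 x2))
    with ((f y1 y2 - f x1 x2) + c * (g y1 y2 - g x1 x2)) by ring.
  eapply Rle_lt_trans; [apply Rabs_triang|]. rewrite Rabs_mult.
  pose proof (Rabs_pos c). pose proof (Rabs_pos (g y1 y2 - g x1 x2)).
  assert (Rabs c * Rabs (g y1 y2 - g x1 x2) <= (Rabs c + 1) * (eps / (2 * (Rabs c + 1)))) by nra.
  replace ((Rabs c + 1) * (eps / (2 * (Rabs c + 1)))) with (eps/2) in H5 by (field; lra).
  lra.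
Qed.

Lemma pickN d (p q : nat) : (0 < q)%nat -> d = INR p / INR q ->
  forall (N0 : nat) (B : R), exists N N2 : nat,
    (1 <= N)%nat /\ (N0 <= N)%nat /\ INR N2 = d * INR N /\ B < INR N.
Proof.
  intros Hq Hd N0 B. destruct (INR_unbounded B) as [n Hn].
  exists (S (n + N0) * q)%nat, (S (n + N0) * p)%nat.
  assert (Hle : (S (n + N0) <= S (n + N0) * q)%nat) by nia.
  split; [lia|]. split; [lia|]. split.
  - rewrite !mult_INR, Hd. field. apply not_0_INR. lia.
  - apply le_INR in Hle. assert (INR n < INR (S (n + N0))) by (apply lt_INR; lia). lra.
Qed.

Lemma gridA d t y1 y2 : 0 < d <= 1 -> 0 <= t <= 1 -> inD y1 y2 ->
  inD (y1 - t * (d * y1 - d * y2)) (y2 - t * (- y1 + y2)).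
Proof. intros Hd Ht [[a1 b1] [a2 b2]]. unfold inD. assert (0 <= t*d <= 1) by nra. split; split; nra. Qed.

Lemma grid_in (j N : nat) : (1 <= N)%nat -> (j <= N)%nat -> 0 <= INR j / INR N <= 1.
Proof.
  intros HN Hj. assert (HNp : 0 < INR N) by (apply lt_0_INR; lia).
  apply le_INR in Hj. pose proof (pos_INR j). split.
  - apply Rdiv_le_0_compat; lra.
  - apply (Rmult_le_reg_r (INR N)); [lra|]. unfold Rdiv. rewrite Rmult_assoc, Rinv_l; lra.
Qed.

Lemma bern_compA_ge d k (N N2 : nat) f m x1 x2 : 0 < d <= 1 -> 0 < k ->
  (1 <= N)%nat -> (1 <= N2)%nat -> k / INR N <= 1 -> inD x1 x2 ->
  (forall y1 y2, inD y1 y2 -> m <= f y1 y2) ->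
  m <= bernstein N N2 (compA d k N f) x1 x2.
Proof.
  intros Hd Hk HN HN2 Ht Hx Hf. apply bern_ge; auto.
  intros j1 j2 Hj1 Hj2. unfold compA. apply Hf. apply gridA; auto.
  - split; [|exact Ht]. apply Rdiv_le_0_compat; [lra| apply lt_0_INR; lia].
  - split; apply grid_in; auto.
Qed.


Theorem theorem2 (d kappa : R)
  (hd : 0 < d <= 1) (hkappa : 0 < kappa)
  (hdrat : exists p q : nat, (0 < q)%nat /\ d = INR p / INR q) :
  (* parabolic version *)
  (forall (u : R -> R -> R -> R) (Lu : R -> R -> R -> R),
     (forall t, 0 <= t -> gen d kappa (u t) (Lu t)) ->
     (forall t, 0 <= t -> forall eps, 0 < eps -> exists delta, 0 < delta /\
        forall s, 0 <= s -> Rabs (s - t) < delta ->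
          forall x1 x2, inD x1 x2 -> Rabs (u s x1 x2 - u t x1 x2) < eps) ->
     (forall t, 0 < t -> forall x1 x2, inD x1 x2 ->
        exists ut, is_derive (fun s => u s x1 x2) t ut /\ ut - Lu t x1 x2 >= 0) ->
     (forall x1 x2, inD x1 x2 -> u 0 x1 x2 >= 0) ->
     forall t, 0 <= t -> forall x1 x2, inD x1 x2 -> u t x1 x2 >= 0)
  /\
  (* elliptic version *)
  (forall (u Lu : R -> R -> R),
     gen d kappa u Lu ->
     (forall x1 x2, inD x1 x2 -> - Lu x1 x2 >= 0) ->
     forall x1 x2, inD x1 x2 -> u x1 x2 >= 0).
Proof.
  destruct hdrat as [p [q [Hq Hdq]]].
  split.
  -
    intros u Lu Hgen Hcont Hder H0 t Ht x1 x2 Hx.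
    destruct (Rlt_or_le (u t x1 x2) 0) as [Hneg|Hpos]; [exfalso| lra].
    set (eps := - u t x1 x2 / (2 * (t + 1))).
    assert (Heps : 0 < eps) by (unfold eps; apply Rdiv_lt_0_compat; lra).
    assert (Hepst : eps * (t + 1) = - u t x1 x2 / 2) by (unfold eps; field; lra).
    set (v := fun s y1 y2 => u s y1 y2 + eps * s).
    destruct (EVTM.EVT3 t v Ht) as [ts [xs1 [xs2 [[Hts0 HtsT] [Hxs Hmin]]]]].
    { intros s0 y1 y2 [Hs0 HsT] Hy e He.
      destruct (Hcont s0 Hs0 (e/3)) as [d1 [Hd1 H1]]; [lra|].
      destruct (proj1 (proj1 (Hgen s0 Hs0)) y1 y2 Hy (e/3)) as [d2 [Hd2 H2]]; [lra|].
      set (d3 := e / (3 * (eps + 1))).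
      assert (Hd3 : 0 < d3) by (unfold d3; apply Rdiv_lt_0_compat; lra).
      exists (Rmin d1 (Rmin d2 d3)). split; [apply Rmin_pos; [|apply Rmin_pos]; auto|].
      intros s z1 z2 [Hs HsT'] Hz Hss Hz1 Hz2.
      pose proof (Rmin_l d1 (Rmin d2 d3)). pose proof (Rmin_r d1 (Rmin d2 d3)).
      pose proof (Rmin_l d2 d3). pose proof (Rmin_r d2 d3).
      specialize (H1 s Hs ltac:(lra) z1 z2 Hz).
      specialize (H2 z1 z2 Hz ltac:(lra) ltac:(lra)).
      unfold v.
      replace (u s z1 z2 + eps * s - (u s0 y1 y2 + eps * s0))
        with ((u s z1 z2 - u s0 z1 z2) + (u s0 z1 z2 - u s0 y1 y2) + eps * (s - s0)) by ring.
      eapply Rle_lt_trans; [apply Rabs_triang|].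
      pose proof (Rabs_triang (u s z1 z2 - u s0 z1 z2) (u s0 z1 z2 - u s0 y1 y2)).
      rewrite Rabs_mult, (Rabs_pos_eq eps) by lra.
      assert (eps * Rabs (s - s0) <= eps * d3) by (apply Rmult_le_compat_l; lra).
      assert (eps * d3 < e / 3).
      { unfold d3. apply (Rmult_lt_reg_r (3 * (eps + 1))); [lra|].
        replace (eps * (e / (3 * (eps + 1))) * (3 * (eps + 1))) with (eps * e) by (field; lra).
        nra. }
      lra. }
    assert (Hvmin : v ts xs1 xs2 <= v t x1 x2) by (apply Hmin; auto; lra).
    assert (Hvneg : v t x1 x2 < 0).
    { unfold v. assert (eps * t <= eps * (t + 1)) by (apply Rmult_le_compat_l; lra). lra. }
    assert (Htspos : 0 < ts).
    { destruct (Rle_lt_or_eq_dec _ _ Hts0) as [?|Hz]; auto. exfalso.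
      subst ts. specialize (H0 xs1 xs2 Hxs). unfold v in Hvmin. lra. }
    assert (Hsp : forall y1 y2, inD y1 y2 -> u ts xs1 xs2 <= u ts y1 y2).
    { intros y1 y2 Hy. specialize (Hmin ts y1 y2 (conj Hts0 HtsT) Hy). unfold v in Hmin. lra. }
    destruct (Hgen ts Hts0) as [_ [_ Hconv]].
    destruct (Hconv (eps/2)) as [N0 HN0]; [lra|].
    destruct (pickN d p q Hq Hdq N0 kappa) as [N [N2 [H1N [HNN0 [HN2 HNk]]]]].
    assert (HNp : 0 < INR N) by lra.
    assert (HN2p : (1 <= N2)%nat).
    { destruct N2; [|lia]. simpl in HN2. nra. }
    assert (Htau : kappa / INR N <= 1).
    { apply (Rmult_le_reg_r (INR N)); [lra|]. unfold Rdiv. rewrite Rmult_assoc, Rinv_l; lra. }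
    assert (HB := bern_compA_ge d kappa N N2 (u ts) (u ts xs1 xs2) xs1 xs2 hd hkappa H1N HN2p Htau Hxs Hsp).
    specialize (HN0 N N2 H1N HNN0 HN2 xs1 xs2 Hxs).
    apply Rabs_def2 in HN0.
    assert (HP : 0 <= (bernstein N N2 (compA d kappa N (u ts)) xs1 xs2 - u ts xs1 xs2) / (1 / INR N)).
    { replace ((bernstein N N2 (compA d kappa N (u ts)) xs1 xs2 - u ts xs1 xs2) / (1 / INR N))
        with (INR N * (bernstein N N2 (compA d kappa N (u ts)) xs1 xs2 - u ts xs1 xs2)) by (field; lra).
      apply Rmult_le_pos; lra. }
    assert (HLu : - (eps/2) < Lu ts xs1 xs2) by lra.
    destruct (Hder ts Htspos xs1 xs2 Hxs) as [ut [Hd Hut]].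
    apply is_derive_Reals in Hd.
    destruct (Hd (eps/2)) as [del Hdel]; [lra|].
    set (h := - Rmin (del/2) (ts/2)).
    assert (Hdp := cond_pos del).
    assert (Hh1 : Rmin (del/2) (ts/2) > 0) by (apply Rmin_pos; lra).
    pose proof (Rmin_l (del/2) (ts/2)). pose proof (Rmin_r (del/2) (ts/2)).
    assert (Hh0 : h <> 0) by (unfold h; lra).
    assert (Hhabs : Rabs h < del) by (unfold h; rewrite Rabs_Ropp, Rabs_pos_eq; lra).
    specialize (Hdel h Hh0 Hhabs). cbv beta in Hdel.
    apply Rabs_def2 in Hdel.
    assert (Hm2 : v ts xs1 xs2 <= v (ts + h) xs1 xs2).
    { apply Hmin; auto. unfold h; split; lra. }
    unfold v in Hm2.
    assert (Hq2 : (u (ts + h) xs1 xs2 - u ts xs1 xs2) / h <= - eps).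
    { apply (Rmult_le_reg_r (- h)); [unfold h; lra|].
      replace ((u (ts + h) xs1 xs2 - u ts xs1 xs2) / h * - h)
        with (- (u (ts + h) xs1 xs2 - u ts xs1 xs2)) by (field; exact Hh0).
      replace (- eps * - h) with (eps * h) by ring. lra. }
    lra.
  -
    intros u Lu Hgen HL x1 x2 Hx.
    destruct Hgen as [[Hcu [Hu00 Hu11]] [_ Hconv]].
    destruct (Rlt_or_le (u x1 x2) 0) as [Hneg|Hpos]; [exfalso| lra].
    set (W0 := Wf d x1 x2).
    set (eps := - u x1 x2 / (2 * (Rabs W0 + 1))).
    pose proof (Rabs_pos W0).
    assert (Heps : 0 < eps) by (unfold eps; apply Rdiv_lt_0_compat; lra).
    assert (HepsW : eps * (Rabs W0 + 1) = - u x1 x2 / 2) by (unfold eps; field; lra).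
    set (v := fun y1 y2 => u y1 y2 + eps * Wf d y1 y2).
    assert (Hvc : contD v) by (apply contD_plus_scal; [exact Hcu| apply contD_W]).
    assert (Hvneg : v x1 x2 < 0).
    { unfold v. fold W0. pose proof (Rle_abs W0).
      assert (eps * W0 <= eps * (Rabs W0 + 1)) by (apply Rmult_le_compat_l; lra). lra. }
    destruct (EVTM.EVT3 0 (fun _ y1 y2 => v y1 y2) (Rle_refl 0))
      as [ts [xs1 [xs2 [Hts [Hxs Hmin]]]]].
    { intros s0 y1 y2 _ Hy e He.
      destruct (Hvc y1 y2 Hy e He) as [del [Hdel Hcc]].
      exists del. split; [exact Hdel|]. intros s z1 z2 _ Hz _ Hz1 Hz2. apply Hcc; auto. }
    assert (Hmin' : forall y1 y2, inD y1 y2 -> v xs1 xs2 <= v y1 y2).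
    { intros y1 y2 Hy. apply (Hmin 0 y1 y2); auto. split; lra. }
    assert (Hvs : v xs1 xs2 < 0) by (specialize (Hmin' x1 x2 Hx); lra).
    assert (Hnc0 : ~ (xs1 = 0 /\ xs2 = 0)).
    { intros [-> ->]. unfold v in Hvs. rewrite Hu00 in Hvs. unfold Wf in Hvs. nra. }
    assert (Hnc1 : ~ (xs1 = 1 /\ xs2 = 1)).
    { intros [-> ->]. unfold v in Hvs. rewrite Hu11 in Hvs. unfold Wf in Hvs. nra. }
    set (P0 := Phi d kappa xs1 xs2 0).
    assert (HP0 : P0 < 0) by (apply Phi0_neg; auto).
    assert (HeP : 0 < eps * - P0) by (apply Rmult_lt_0_compat; lra).
    assert (He : 0 < eps * - P0 / 4) by lra.
    destruct (Phi_cont d kappa xs1 xs2 (- P0 / 2)) as [alp [Halp Hcont]]; [lra|].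
    destruct (Hconv (eps * - P0 / 4) He) as [N0 HN0].
    destruct (pickN d p q Hq Hdq N0 (kappa / alp + kappa)) as [N [N2 [H1N [HNN0 [HN2 HNk]]]]].
    assert (Hka : 0 < kappa / alp) by (apply Rdiv_lt_0_compat; lra).
    assert (HNp : 0 < INR N) by lra.
    assert (HN2p : (1 <= N2)%nat).
    { destruct N2; [|lia]. simpl in HN2. nra. }
    assert (Htau : kappa / INR N <= 1).
    { apply (Rmult_le_reg_r (INR N)); [lra|]. unfold Rdiv. rewrite Rmult_assoc, Rinv_l; lra. }
    assert (Htau0 : 0 < kappa / INR N) by (apply Rdiv_lt_0_compat; lra).
    assert (Htaua : kappa / INR N < alp).
    { apply (Rmult_lt_reg_r (INR N)); [lra|]. unfold Rdiv. rewrite Rmult_assoc, Rinv_l by lra.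
      apply (Rmult_lt_reg_r (/ alp)); [apply Rinv_0_lt_compat; lra|].
      replace (alp * INR N * / alp) with (INR N) by (field; lra).
      replace (kappa * 1 * / alp) with (kappa / alp) by (field; lra). lra. }
    specialize (Hcont (kappa / INR N)).
    simpl in Hcont. unfold R_dist in Hcont.
    assert (HPhi : Rabs (Phi d kappa xs1 xs2 (kappa / INR N) - P0) < - P0 / 2).
    { apply Hcont. split; [unfold D_x, no_cond; split; [auto| lra]|].
      rewrite Rminus_0_r, Rabs_pos_eq; lra. }
    apply Rabs_def2 in HPhi.
    assert (HB := bern_compA_ge d kappa N N2 v (v xs1 xs2) xs1 xs2 hd hkappa H1N HN2p Htau Hxs Hmin').
    assert (Hlin : bernstein N N2 (compA d kappa N v) xs1 xs2
       = bernstein N N2 (compA d kappa N u) xs1 xs2 + eps * bernstein N N2 (compA d kappa N (Wf d)) xs1 xs2)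
      by exact (bern_lin N N2 (compA d kappa N u) (compA d kappa N (Wf d)) eps xs1 xs2).
    rewrite Hlin in HB. unfold v in HB.
    assert (HQ := W_disc d kappa N N2 xs1 xs2 (proj1 hd) H1N HN2).
    specialize (HN0 N N2 H1N HNN0 HN2 xs1 xs2 Hxs).
    apply Rabs_def2 in HN0.
    specialize (HL xs1 xs2 Hxs).
    set (Bu := bernstein N N2 (compA d kappa N u) xs1 xs2) in *.
    set (Bw := bernstein N N2 (compA d kappa N (Wf d)) xs1 xs2) in *.
    assert (Hsum : (Bu - u xs1 xs2) / (1 / INR N) + eps * ((Bw - Wf d xs1 xs2) / (1 / INR N))
       = INR N * ((Bu + eps * Bw) - (u xs1 xs2 + eps * Wf d xs1 xs2))) by (field; lra).
    assert (Hsum0 : 0 <= INR N * ((Bu + eps * Bw) - (u xs1 xs2 + eps * Wf d xs1 xs2)))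
      by (apply Rmult_le_pos; lra).
    rewrite HQ in Hsum.
    assert (Heq : eps * Phi d kappa xs1 xs2 (kappa / INR N) < eps * (P0 / 2))
      by (apply Rmult_lt_compat_l; lra).
    assert (He2 : eps * (P0 / 2) = - 2 * (eps * - P0 / 4)) by field.
    lra.
Qed.
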